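(* Let $R$ be a bounded dominant region of $\mathcal A^m_\Phi$ and let $w_R\in W_a$ be the unique element with $r(w_R,\alpha)=r_\alpha(\phi(R))$ for all $\alpha\in\Phi^+$. Then $w_R$ is the unique $w\in W_a$ such that $wA_\circ\subseteq R$ and, whenever $\alpha\in\Phi^+$, $r\in\mathbb Z$ and $(\alpha,x)>r$ holds for some $x\in R$, we have $(\alpha,x)>r$ for all $x\in wA_\circ$.
   Context: $\Phi$ irreducible crystallographic of rank $\ell$ in Euclidean $V$, positive system $\Phi^+$, simple roots $\Pi=\{\sigma_i\}$, highest root $\tilde\alpha$, $m\ge1$. $\mathcal A^m_\Phi$: hyperplanes $H_{\alpha,k}=\{x:(\alpha,x)=k\}$, $\alpha\in\Phi$, $0\le k\le m$; dominant: inside $\{x:(\alpha,x)>0\ \forall\alpha\in\Phi^+\}$. $W_a$: group generated by reflections in all $H_{\alpha,k}$, $k\in\mathbb Z$; $A_\circ=\{x:(\sigma_i,x)>0,\ (\tilde\alpha,x)<1\}$; $r(w,\alpha)$ is the integer $r$ with $r-1<(\alpha,x)<r$ on $wA_\circ$. $\phi(R)$ is the chain $\emptyset=\mathcal J_0\subseteq\cdots\subseteq\mathcal J_m$ with $\mathcal J_r=\{\alpha\in\Phi^+:(\alpha,x)<r \text{ on } R\}$, which is a positive geometric chain of ideals (ideals in the root poset with $(\mathcal J_i+\mathcal J_j)\cap\Phi^+\subseteq\mathcal J_{i+j}$ for $i+j\le m$, the complements $\mathcal I_i$ satisfying $(\mathcal I_i+\mathcal I_j)\cap\Phi^+\subseteq\mathcal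 I_{i+j}$ with $\mathcal I_i=\mathcal I_m$ for $i>m$, and $\Pi\subseteq\mathcal J_m$). For such a chain, $r_\alpha(\mathcal J)=\min\{r_1+\dots+r_k:\alpha=\alpha_1+\dots+\alpha_k,\ \alpha_i\in\mathcal J_{r_i}\}$; there is a unique $w\in W_a$ with $r(w,\alpha)=r_\alpha(\mathcal J)$ for all $\alpha\in\Phi^+$. *)

(* Defs.v *)
From HB Require Import structures.
From mathcomp Require Import all_boot all_order all_algebra.
From mathcomp Require Import reals.

Set Implicit Arguments.
Unset Strict Implicit.
Unset Printing Implicit Defensive.

Import Order.TTheory GRing.Theory Num.Theory.
Local Open Scope ring_scope.

Section RootSystems.
Variables (R : realType) (n : nat).
Notation V := 'rV[R]_n.

Definition dotv (u v : V) : R := \sum_(i < n) u 0 i * v 0 i.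

Definition aff_refl (alpha : V) (k : R) (x : V) : V :=
  x - ((2 * (dotv alpha x - k)) / dotv alpha alpha) *: alpha.

Definition root_system (Phi : seq V) : Prop :=
  [/\ (0 : V) \notin Phi,
      row_full (\matrix_(i < size Phi) nth 0 Phi i),
      (forall a b, a \in Phi -> b \in Phi -> aff_refl a 0 b \in Phi),
      (forall a b, a \in Phi -> b \in Phi ->
         exists z : int, 2 * dotv a b / dotv a a = z%:~R) &
      (forall a (c : R), a \in Phi -> c *: a \in Phi -> c = 1 \/ c = -1)].

(* Irreducible: Phi nonempty and not a union of two nonempty orthogonal parts. *)
Definition irreducible_rs (Phi : seq V) : Prop :=
  Phi != [::] /\
  forall P : V -> Prop,
    (exists2 a, a \in Phi & P a) -> (exists2 b, b \in Phi & ~ P b) ->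
    exists a b, [/\ a \in Phi, b \in Phi, P a, ~ P b & dotv a b != 0].

Definition simple_system (Phi : seq V) (Pi : 'I_n -> V) : Prop :=
  [/\ (forall i, Pi i \in Phi),
      row_free (\matrix_(i < n) Pi i) &
      (forall a, a \in Phi -> exists c : 'I_n -> int,
         a = \sum_(i < n) (c i)%:~R *: Pi i /\
         ((forall i, 0 <= c i) \/ (forall i, c i <= 0)))].

Definition nonneg_comb (Pi : 'I_n -> V) (v : V) : Prop :=
  exists c : 'I_n -> nat, v = \sum_(i < n) (c i)%:R *: Pi i.

Definition pos_root (Phi : seq V) (Pi : 'I_n -> V) (a : V) : Prop :=
  a \in Phi /\ nonneg_comb Pi a.

Definition highest_root (Phi : seq V) (Pi : 'I_n -> V) (th : V) : Prop :=
  pos_root Phi Pi th /\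
  forall b, pos_root Phi Pi b -> nonneg_comb Pi (th - b).

Definition off_arr (Phi : seq V) (m : nat) (x : V) : Prop :=
  forall a (k : nat), a \in Phi -> (k <= m)%N -> dotv a x != k%:R.

(* Regions of A^m_Phi: connected components of the complement, i.e. the
   (nonempty) classes of points off the arrangement having the same position
   with respect to every hyperplane. *)
Definition region (Phi : seq V) (m : nat) (Rg : V -> Prop) : Prop :=
  exists x0, off_arr Phi m x0 /\
    forall y, Rg y <->
      (off_arr Phi m y /\
       forall a (k : nat), a \in Phi -> (k <= m)%N ->
         (dotv a y < k%:R) = (dotv a x0 < k%:R)).

Definition dominant (Phi : seq V) (Pi : 'I_n -> V) (Rg : V -> Prop) : Prop :=
  forall x, Rg x -> forall a, pos_root Phi Pi a -> 0 < dotv a x.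

Definition bounded (Rg : V -> Prop) : Prop :=
  exists M : R, forall x, Rg x -> dotv x x <= M.

(* The affine Weyl group W_a: group generated by the reflections in all
   H_{alpha,k}, alpha in Phi, k in Z (reflections are involutions, so finite
   products of them form the generated group). *)
Inductive in_Wa (Phi : seq V) : (V -> V) -> Prop :=
  | Wa_id : in_Wa Phi id
  | Wa_refl (a : V) (k : int) (w : V -> V) :
      a \in Phi -> in_Wa Phi w -> in_Wa Phi (aff_refl a k%:~R \o w).

Definition fund_alcove (Pi : 'I_n -> V) (th : V) (x : V) : Prop :=
  (forall i, 0 < dotv (Pi i) x) /\ dotv th x < 1.

Definition r_of (Pi : 'I_n -> V) (th : V) (w : V -> V) (a : V) (r : int) : Prop :=
  forall x, fund_alcove Pi th x -> r%:~R - 1 < dotv a (w x) < r%:~R.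

(* phi(R) : J_r = {alpha in Phi^+ : (alpha,x) < r on R}, 0 <= r <= m. *)
Definition chainJ (Phi : seq V) (Pi : 'I_n -> V) (Rg : V -> Prop) (r : nat)
  (a : V) : Prop :=
  pos_root Phi Pi a /\ forall x, Rg x -> dotv a x < r%:R.

Definition decomp_value (J : nat -> V -> Prop) (m : nat) (a : V) (v : nat) : Prop :=
  exists s : seq (V * nat),
    [/\ s != [::],
        a = \sum_(p <- s) p.1,
        (forall p, p \in s -> (p.2 <= m)%N /\ J p.2 p.1) &
        v = (\sum_(p <- s) p.2)%N].

Definition r_alpha (J : nat -> V -> Prop) (m : nat) (a : V) (v : nat) : Prop :=
  decomp_value J m a v /\ forall v', decomp_value J m a v' -> (v <= v')%N.

End RootSystems.

(* Main.v *)
Require Import Defs.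
From HB Require Import structures.
From mathcomp Require Import all_boot all_order all_algebra.
From mathcomp Require Import reals.
From mathcomp Require Import ring lra zify.
Import Order.TTheory GRing.Theory Num.Theory.
Local Open Scope ring_scope.
Set Implicit Arguments.
Unset Strict Implicit.
Unset Printing Implicit Defensive.
Section Basic.
Variables (R : realType) (n : nat).
Notation V := 'rV[R]_n.
Implicit Types (u v w x y a b : V).

Lemma dotvC u v : dotv u v = dotv v u.
Proof. by apply: eq_bigr => i _; rewrite mulrC. Qed.

Lemma dotvDl u v w : dotv (u + v) w = dotv u w + dotv v w.
Proof. by rewrite /dotv -big_split; apply: eq_bigr => i _; rewrite mxE mulrDl. Qed.

Lemma dotvZl c u w : dotv (c *: u) w = c * dotv u w.
Proof. by rewrite /dotv mulr_sumr; apply: eq_bigr => i _; rewrite mxE mulrA. Qed.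

Lemma dotvNl u w : dotv (- u) w = - dotv u w.
Proof. by rewrite -scaleN1r dotvZl mulN1r. Qed.

Lemma dotvBl u v w : dotv (u - v) w = dotv u w - dotv v w.
Proof. by rewrite dotvDl dotvNl. Qed.

Lemma dotv0l w : dotv 0 w = 0.
Proof. by rewrite -(scale0r 0) dotvZl mul0r. Qed.

Lemma dotvDr u v w : dotv w (u + v) = dotv w u + dotv w v.
Proof. by rewrite !(dotvC w) dotvDl. Qed.
Lemma dotvZr c u w : dotv w (c *: u) = c * dotv w u.
Proof. by rewrite !(dotvC w) dotvZl. Qed.
Lemma dotvNr u w : dotv w (- u) = - dotv w u.
Proof. by rewrite !(dotvC w) dotvNl. Qed.
Lemma dotvBr u v w : dotv w (u - v) = dotv w u - dotv w v.
Proof. by rewrite !(dotvC w) dotvBl. Qed.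
Lemma dotv0r w : dotv w 0 = 0.
Proof. by rewrite dotvC dotv0l. Qed.

Lemma dotv_suml (I : Type) (r : seq I) (P : pred I) (F : I -> V) w :
  dotv (\sum_(i <- r | P i) F i) w = \sum_(i <- r | P i) dotv (F i) w.
Proof.
elim/big_rec2: _ => [|i y1 y2 _ <-]; first by rewrite dotv0l.
by rewrite dotvDl.
Qed.

Lemma dotv_ge0 u : 0 <= dotv u u.
Proof. by apply: sumr_ge0 => i _; rewrite -expr2 sqr_ge0. Qed.

Lemma dotv_eq0 u : (dotv u u == 0) = (u == 0).
Proof.
apply/idP/idP; last by move/eqP->; rewrite dotv0l.
rewrite psumr_eq0; last by move=> i _; rewrite -expr2 sqr_ge0.
move/allP => H; apply/eqP/rowP => i; rewrite mxE.
have := H i (mem_index_enum i); rewrite /= -expr2 sqrf_eq0.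
by move/eqP.
Qed.

Lemma dotv_gt0 u : u != 0 -> 0 < dotv u u.
Proof. by move=> nz; rewrite lt0r dotv_eq0 nz dotv_ge0. Qed.

Definition ev (f : V * R) x := dotv f.1 x - f.2.
Definition cf a b := 2 * dotv a b / dotv b b.
Definition pb (g f : V * R) : V * R :=
  (f.1 - cf f.1 g.1 *: g.1, f.2 - cf f.1 g.1 * g.2).
Definition sr (f : V * R) := aff_refl f.1 f.2.
Definition negf (f : V * R) : V * R := (- f.1, - f.2).

Lemma srE f x : sr f x = x - (2 * ev f x / dotv f.1 f.1) *: f.1.
Proof. by []. Qed.

Lemma ev_sr g f x : ev f (sr g x) = ev (pb g f) x.
Proof.
rewrite /ev /pb /sr /aff_refl /cf /= dotvBr dotvZr dotvBl dotvZl.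
set A := dotv f.1 x; set B := dotv f.1 g.1; set C := dotv g.1 x; set D := dotv g.1 g.1.
set E := D^-1. ring.
Qed.

Lemma sr_lin g x t a :
  sr g (x - t *: a) = sr g x - t *: (pb g (a, 0)).1.
Proof.
rewrite /sr /pb /aff_refl /cf /= dotvBr dotvZr (dotvC g.1 a).
apply/rowP => i; rewrite !mxE.
set A := dotv g.1 x; set B := dotv a g.1; set D := dotv g.1 g.1.
set E := D^-1. ring.
Qed.

Lemma cf_self b : dotv b b != 0 -> cf b b = 2.
Proof. by move=> nz; rewrite /cf mulfK. Qed.

Lemma sr_invol g x : dotv g.1 g.1 != 0 -> sr g (sr g x) = x.
Proof.
move=> nz; rewrite {1}/sr /aff_refl -/(ev g (sr g x)) ev_sr /pb cf_self //=.
rewrite /ev /= dotvBl dotvZl /sr /aff_refl /=.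
apply/rowP => i; rewrite !mxE.
set A := dotv g.1 x; set D := dotv g.1 g.1.
field. done.
Qed.

Lemma norm_pb g f : dotv g.1 g.1 != 0 ->
  dotv (pb g f).1 (pb g f).1 = dotv f.1 f.1.
Proof.
move=> nz; rewrite /pb /cf /= !(dotvBl, dotvBr, dotvZl, dotvZr) (dotvC g.1 f.1).
set B := dotv f.1 g.1; set D := dotv g.1 g.1.
field. done.
Qed.

Lemma sr_pb g f x : dotv g.1 g.1 != 0 -> sr (pb g f) x = sr g (sr f (sr g x)).
Proof.
move=> nz; rewrite srE norm_pb // -ev_sr.
rewrite [sr f _]srE sr_lin sr_invol //.
Qed.

Lemma pb_invol g f : dotv g.1 g.1 != 0 -> pb g (pb g f) = f.
Proof.
move=> nz; rewrite /pb /cf /=; case: f => a k /=.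
rewrite dotvBl dotvZl; set c := 2 * dotv a g.1 / dotv g.1 g.1.
have -> : 2 * (dotv a g.1 - c * dotv g.1 g.1) / dotv g.1 g.1 = - c.
  rewrite /c; field; done.
by rewrite scaleNr opprK subrK mulNr opprK subrK.
Qed.

Lemma pb_self g : dotv g.1 g.1 != 0 -> pb g g = negf g.
Proof.
move=> nz; rewrite /pb cf_self // /negf; congr (_, _).
  by apply/rowP => i; rewrite !mxE; ring.
by ring.
Qed.

Lemma ev_negf f x : ev (negf f) x = - ev f x.
Proof. rewrite /ev /negf /= dotvNl; ring. Qed.

Lemma sr_negf f x : sr (negf f) x = sr f x.
Proof.
rewrite !srE ev_negf /negf /= dotvNl dotvNr opprK.
apply/rowP => i; rewrite !mxE; ring.
Qed.

End Basic.
Section Roots.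
Variables (R : realType) (n : nat) (Phi : seq 'rV[R]_n) (Pi : 'I_n -> 'rV[R]_n)
  (th : 'rV[R]_n).
Hypotheses (hrs : root_system Phi) (hss : simple_system Phi Pi)
  (hth : highest_root Phi Pi th).
Notation V := 'rV[R]_n.
Implicit Types (u v w x y a b : V).

Lemma root_neq0 a : a \in Phi -> a != 0.
Proof. by case: hrs => h0 _ _ _ _ aP; apply: contraNneq h0 => <-. Qed.

Lemma root_nz a : a \in Phi -> dotv a a != 0.
Proof. by move=> aP; rewrite dotv_eq0 root_neq0. Qed.

Lemma phiN a : a \in Phi -> - a \in Phi.
Proof.
move=> aP; case: hrs => _ _ hr _ _; have := hr a a aP aP.
rewrite /aff_refl subr0 mulfK ?root_nz //.
by rewrite scaler_nat mulr2n opprD addrA subrr sub0r.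
Qed.

Lemma refl_root a b : a \in Phi -> b \in Phi -> a - cf a b *: b \in Phi.
Proof.
move=> aP bP; case: hrs => _ _ hr _ _; have := hr b a bP aP.
by rewrite /aff_refl subr0 /cf dotvC.
Qed.

Lemma cf_int a b : a \in Phi -> b \in Phi -> exists z : int, cf a b = z%:~R.
Proof.
move=> aP bP; case: hrs => _ _ _ hi _; have [z hz] := hi b a bP aP.
by exists z; rewrite /cf dotvC.
Qed.

Lemma reduced a c : a \in Phi -> c *: a \in Phi -> c = 1 \/ c = -1.
Proof. by case: hrs => _ _ _ _ hd; apply: hd. Qed.

Lemma lin_indep (c : 'I_n -> R) : \sum_i c i *: Pi i = 0 -> forall i, c i = 0.
Proof.
move=> h i; case: hss => _ hfree _.
have : (\row_j c j) *m (\matrix_j Pi j) = 0 *m (\matrix_j Pi j).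
  rewrite mul0mx mulmx_sum_row -[X in _ = X]h; apply: eq_bigr => j _.
  by rewrite rowK mxE.
by move/(row_free_inj hfree)/rowP/(_ i); rewrite !mxE.
Qed.

Lemma comb_uniq (c1 c2 : 'I_n -> R) :
  \sum_i c1 i *: Pi i = \sum_i c2 i *: Pi i -> forall i, c1 i = c2 i.
Proof.
move=> h i; apply/eqP; rewrite -subr_eq0; apply/eqP; move: i; apply: lin_indep.
under eq_bigr do rewrite scalerBl.
by rewrite sumrB h subrr.
Qed.

Lemma pos_or_neg a : a \in Phi -> pos_root Phi Pi a \/ pos_root Phi Pi (- a).
Proof.
move=> aP; case: hss => _ _ /(_ a aP) [c [ha [hc|hc]]].
  left; split; first by [].
  exists (fun i => `|c i|%N); rewrite ha; apply: eq_bigr => i _.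
  by rewrite natr_absz ger0_norm.
right; split; first by rewrite phiN.
exists (fun i => `|c i|%N); rewrite ha -sumrN; apply: eq_bigr => i _.
by rewrite natr_absz ler0_norm // rmorphN scaleNr.
Qed.

Lemma not_pos_neg a : a \in Phi -> pos_root Phi Pi a -> pos_root Phi Pi (- a) -> False.
Proof.
move=> aP [_ [c hc]] [_ [d hd]].
have h0 : \sum_i ((c i + d i)%:R : R) *: Pi i = 0.
  under eq_bigr do rewrite natrD scalerDl.
  by rewrite big_split /= -hc -hd subrr.
have c0 : forall i, c i = 0%N.
  move=> i; have := lin_indep h0 i => /eqP; rewrite pnatr_eq0 addn_eq0.
  by case/andP=> /eqP.
have := root_neq0 aP; rewrite hc big1 ?eqxx // => i _.
by rewrite c0 scale0r.
Qed.

Lemma th_root : th \in Phi.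
Proof. by case: hth => [[]]. Qed.

Lemma th_pos : pos_root Phi Pi th.
Proof. by case: hth. Qed.

Lemma th_sub a : pos_root Phi Pi a -> nonneg_comb Pi (th - a).
Proof. by case: hth => _; apply. Qed.

Lemma dot_comb_ge0 (c : 'I_n -> nat) x : fund_alcove Pi th x ->
  0 <= dotv (\sum_i (c i)%:R *: Pi i) x.
Proof.
move=> [hx _]; rewrite dotv_suml; apply: sumr_ge0 => i _.
by rewrite dotvZl mulr_ge0 // ltW.
Qed.

Lemma alc_pos a x : fund_alcove Pi th x -> pos_root Phi Pi a -> 0 < dotv a x.
Proof.
move=> hx [aP [c hc]].
have [/existsP [i ci]|] := boolP [exists i, c i != 0%N].
  rewrite hc dotv_suml (bigD1 i) //= dotvZl.
  apply: (@lt_le_trans _ _ ((c i)%:R * dotv (Pi i) x)).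
    by rewrite mulr_gt0 // ?ltr0n ?lt0n //; case: hx.
  rewrite lerDl; apply: sumr_ge0 => j _; rewrite dotvZl mulr_ge0 //.
  by case: hx => hx _; rewrite ltW.
rewrite negb_exists => /forallP hc0.
have := root_neq0 aP; rewrite hc big1 ?eqxx // => i _.
by have := hc0 i; rewrite negbK => /eqP ->; rewrite scale0r.
Qed.

Lemma alc_lt1 a x : fund_alcove Pi th x -> pos_root Phi Pi a -> dotv a x < 1.
Proof.
move=> hx ha; have [c hc] := th_sub ha.
have := dot_comb_ge0 c hx; rewrite -hc dotvBl subr_ge0 => h.
by apply: le_lt_trans h _; case: hx.
Qed.

Lemma alc_nonempty : exists x, fund_alcove Pi th x.
Proof.
case: hss => _ hfree _; move: hfree; rewrite row_free_unit => hu.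
set M := \matrix_(i < n) Pi i.
set yc : 'cV[R]_n := invmx M *m const_mx 1.
set y : V := yc^T.
have hy : forall i, dotv (Pi i) y = 1.
  move=> i; have : (M *m yc) i 0 = 1 by rewrite /yc mulKVmx // mxE.
  rewrite mxE => <-; apply: eq_bigr => j _; rewrite !mxE.
  by congr (_ * _); rewrite /M mxE.
set e : R := (1 + `|dotv th y|)^-1.
have e0 : 0 < e by rewrite invr_gt0 ltr_pwDl.
exists (e *: y); split.
  by move=> i; rewrite dotvZr hy mulr1.
rewrite dotvZr /e mulrC ltr_pdivrMr ?ltr_pwDl // mul1r.
by apply: (le_lt_trans (ler_norm _)); rewrite ltrDr.
Qed.

End Roots.
Section Affine.
Variables (R : realType) (n : nat) (Phi : seq 'rV[R]_n) (Pi : 'I_n -> 'rV[R]_n)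
  (th : 'rV[R]_n).
Hypotheses (hrs : root_system Phi) (hss : simple_system Phi Pi)
  (hth : highest_root Phi Pi th).
Notation V := 'rV[R]_n.
Notation idx := 'I_n.+1.
Implicit Types (u v w x y a b : V) (f g : V * R).

Definition aroot f := f.1 \in Phi /\ exists z : int, f.2 = z%:~R.
Definition pos_aff f :=
  (pos_root Phi Pi f.1 /\ f.2 <= 0) \/ (pos_root Phi Pi (- f.1) /\ f.2 <= -1).
Definition neg_aff f := pos_aff (negf f).
Definition gs (l : idx) : V * R :=
  if unlift ord0 l is Some i then (Pi i, 0) else (- th, -1).
Definition comb (mu : idx -> R) : V * R :=
  (\sum_i mu (lift ord0 i) *: Pi i - mu ord0 *: th, - mu ord0).

Lemma gs_lift i : gs (lift ord0 i) = (Pi i, 0).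
Proof. by rewrite /gs liftK. Qed.
Lemma gs0 : gs ord0 = (- th, -1).
Proof. by rewrite /gs unlift_none. Qed.

Lemma intr_le0 (z : int) : (z%:~R <= 0 :> R) = (z <= 0).
Proof. by rewrite -(ler_int R). Qed.
Lemma intr_lem1 (z : int) : (z%:~R <= -1 :> R) = (z <= -1).
Proof. by rewrite -(ler_int R) rmorphN rmorph1. Qed.

Lemma aroot_negf f : aroot f -> aroot (negf f).
Proof.
case=> fP [z hz]; split; first by rewrite /negf /=; apply: (phiN hrs).
by exists (- z); rewrite /negf /= hz rmorphN.
Qed.

Lemma aroot_pb g f : aroot g -> aroot f -> aroot (pb g f).
Proof.
case=> gP [zg hg] [fP [zf hf]]; split; first by rewrite /pb /=; apply: (refl_root hrs).
have [c hc] := cf_int hrs fP gP.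
by exists (zf - c * zg); rewrite /pb /= hc hf hg rmorphB rmorphM.
Qed.

Lemma aroot_dicho f : aroot f -> pos_aff f \/ neg_aff f.
Proof.
case=> fP [z hz]; rewrite /neg_aff /pos_aff /negf /= opprK hz.
case: (pos_or_neg hrs hss fP) => hp.
  have [z0|z1] := lerP z 0.
    by left; left; rewrite intr_le0.
  right; right; split => //; rewrite -rmorphN intr_lem1; lia.
have [z0|z1] := lerP z (-1).
  by left; right; rewrite intr_lem1.
right; left; split => //; rewrite -rmorphN intr_le0; lia.
Qed.

Lemma pos_neg_excl f : pos_aff f -> neg_aff f -> False.
Proof.
rewrite /neg_aff /pos_aff /negf /= opprK.
case=> [[ha hk]|[ha hk]] [[hb hl]|[hb hl]].
- by apply: (not_pos_neg hrs hss (proj1 ha)).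
- lra.
- lra.
- by apply: (not_pos_neg hrs hss (proj1 hb)).
Qed.

Lemma pos_aff_ev f x : pos_aff f -> fund_alcove Pi th x -> 0 < ev f x.
Proof.
move=> hf hx; rewrite /ev; case: hf => [[ha hk]|[ha hk]].
  by have := alc_pos hrs hx ha; lra.
have := alc_lt1 hth hx ha; rewrite dotvNl; lra.
Qed.

Lemma neg_aff_ev f x : neg_aff f -> fund_alcove Pi th x -> ev f x < 0.
Proof.
by move=> hf hx; have := pos_aff_ev hf hx; rewrite ev_negf oppr_gt0.
Qed.

Lemma gs_aroot l : aroot (gs l).
Proof.
case: (unliftP ord0 l) => [i ->|->]; rewrite ?gs_lift ?gs0; split => /=.
- by case: hss.
- by exists 0.
- by apply: (phiN hrs); apply: th_root hth.
- by exists (-1); rewrite rmorphN rmorph1.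
Qed.

Lemma gs_nz l : dotv (gs l).1 (gs l).1 != 0.
Proof. by case: (gs_aroot l) => h _; apply: (root_nz hrs). Qed.

Lemma gs_pos l : pos_aff (gs l).
Proof.
case: (unliftP ord0 l) => [i ->|->]; rewrite ?gs_lift ?gs0 /pos_aff /=.
  left; split => //; split; first by case: hss.
  exists (fun j => (j == i : nat)); rewrite (bigD1 i) //= eqxx /= mulr1n scale1r big1 ?addr0 //.
  by move=> j /negPf ->; rewrite scale0r.
by right; rewrite opprK; split => //; apply: th_pos hth.
Qed.

Lemma alc_gs x : fund_alcove Pi th x <-> forall l, 0 < ev (gs l) x.
Proof.
split.
  move=> hx l; case: (unliftP ord0 l) => [i ->|->]; rewrite ?gs_lift ?gs0 /ev /=.
    by rewrite subr0; case: hx.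
  by case: hx => _; rewrite dotvNl; lra.
move=> h; split.
  by move=> i; have := h (lift ord0 i); rewrite gs_lift /ev /= subr0.
by have := h ord0; rewrite gs0 /ev /= dotvNl; lra.
Qed.

Lemma comb_ext m1 m2 : (forall l, m1 l = m2 l) -> comb m1 = comb m2.
Proof.
move=> h; rewrite /comb h; congr (_ - _, _).
by apply: eq_bigr => i _; rewrite h.
Qed.

Lemma comb_lin m1 m2 c :
  comb (fun l => m1 l - c * m2 l) =
  ((comb m1).1 - c *: (comb m2).1, (comb m1).2 - c * (comb m2).2).
Proof.
rewrite /comb /=; congr (_, _); last by ring.
under eq_bigr do rewrite scalerBl -scalerA.
rewrite sumrB -scaler_sumr.
set S1 := \sum_i _; set S2 := \sum_i _.
by apply/rowP => i; rewrite !mxE; ring.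
Qed.

Lemma comb_neg m : negf (comb m) = comb (fun l => - m l).
Proof.
rewrite /comb /negf /=; congr (_, _).
rewrite opprB -sumrN; under [X in _ = X - _]eq_bigr do rewrite scaleNr.
by rewrite scaleNr opprK addrC.
Qed.

Lemma comb_gs l : gs l = comb (fun l' => (l' == l)%:R).
Proof.
rewrite /comb; case: (unliftP ord0 l) => [i ->|->]; rewrite ?gs_lift ?gs0.
  rewrite (bigD1 i) //= big1 ?addr0.
    by rewrite eqxx /= mulr1n scale1r scale0r subr0 oppr0.
  by move=> j ji; rewrite (inj_eq (@lift_inj _ ord0)) (negPf ji) scale0r.
rewrite big1 ?sub0r /= ?mulr1n ?scale1r //.
by move=> j _; rewrite scale0r.
Qed.

Lemma comb_inj m1 m2 : comb m1 = comb m2 -> forall l, m1 l = m2 l.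
Proof.
rewrite /comb => -[h1 h2].
have e0 : m1 ord0 = m2 ord0 by apply: oppr_inj.
move: h1; rewrite e0 => /addIr /(comb_uniq hss) h l.
by case: (unliftP ord0 l) => [i ->|->].
Qed.

Lemma comb1_sum m : (comb m).1 = \sum_(l < n.+1) m l *: (gs l).1.
Proof.
rewrite big_ord_recl gs0 /= addrC scalerN; congr (_ + _).
by apply: eq_bigr => i _; rewrite gs_lift.
Qed.

Lemma pos_comb f : aroot f -> pos_aff f ->
  exists m : idx -> nat, f = comb (fun l => (m l)%:R).
Proof.
case=> fP [z hz]; have [_ [t ht]] := th_pos hth; case=> [[[_ [c hc]] hk]|[hb hk]].
  have zle : z <= 0 by rewrite -intr_le0 -hz.
  exists (fun l => if unlift ord0 l is Some i then (c i + `|z|%N * t i)%N else `|z|%N).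
  rewrite /comb unlift_none; case: f fP hz hc hk => a k /= _ -> -> _.
  congr (_, _); last by rewrite natr_absz ler0_norm // rmorphN opprK.
  under [X in _ = X - _]eq_bigr do rewrite liftK natrD natrM scalerDl -scalerA.
  by rewrite big_split /= -scaler_sumr -ht addrK.
have zle : z <= -1 by rewrite -intr_lem1 -hz.
have [d hd] := th_sub hth hb.
exists (fun l => if unlift ord0 l is Some i then (d i + (`|z|%N - 1) * t i)%N else `|z|%N).
rewrite /comb unlift_none; case: f fP hz hd hk hb => a k /= _ -> hd _ _.
congr (_, _); last by rewrite natr_absz ler0_norm ?rmorphN ?opprK //; lia.
under [X in _ = X - _]eq_bigr do rewrite liftK natrD natrM scalerDl -scalerA.
rewrite big_split /= -scaler_sumr -ht -hd natrB; last by lia.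
rewrite natr_absz ler0_norm; last by lia.
rewrite scalerBl scale1r; set K := (- z)%:~R.
by apply/rowP => i; rewrite !mxE; ring.
Qed.

End Affine.
Section Words.
Variables (R : realType) (n : nat) (Phi : seq 'rV[R]_n) (Pi : 'I_n -> 'rV[R]_n)
  (th : 'rV[R]_n).
Hypotheses (hrs : root_system Phi) (hss : simple_system Phi Pi)
  (hth : highest_root Phi Pi th).
Notation V := 'rV[R]_n.
Notation idx := 'I_n.+1.
Implicit Types (u v w x y a b : V) (f g : V * R).
Notation gs := (gs Pi th).
Notation comb := (comb Pi th).
Notation aroot := (aroot Phi).
Notation pos_aff := (pos_aff Phi Pi).
Notation neg_aff := (neg_aff Phi Pi).

Lemma pb_comb f l m : f = comb m ->
  pb (gs l) f = comb (fun l' => m l' - cf f.1 (gs l).1 * (l' == l)%:R).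
Proof. by move=> hf; rewrite comb_lin -comb_gs -hf. Qed.

Lemma key_C f l : aroot f -> pos_aff f -> neg_aff (pb (gs l) f) -> f = gs l.
Proof.
move=> af pf nf; have [m hm] := pos_comb hth af pf.
set c := cf f.1 (gs l).1.
have hpb := pb_comb l hm.
have af' : aroot (negf (pb (gs l) f)).
  exact: (aroot_negf hrs (aroot_pb hrs (gs_aroot hrs hss hth l) af)).
have [m' hm'] := pos_comb hth af' nf.
move: hm'; rewrite hpb comb_neg => /(comb_inj hss) hmm.
have m0 : forall l', l' != l -> m l' = 0%N.
  move=> l' nl; have := hmm l'; rewrite (negPf nl) mulr0 subr0 => /eqP.
  by rewrite -subr_eq0 -opprD oppr_eq0 -natrD pnatr_eq0 addn_eq0 => /andP [/eqP].
have hf : f = comb (fun l' => (m l)%:R * (l' == l)%:R).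
  rewrite hm; apply: comb_ext => l'.
  have [->|nl] := eqVneq l' l; first by rewrite ?eqxx /= ?mulr1n ?mulr1.
  by rewrite m0 // mulr0.
have hf1 : f.1 = (m l)%:R *: (gs l).1.
  rewrite hf comb1_sum (bigD1 l) //= eqxx mulr1 big1 ?addr0 // => l' nl.
  by rewrite (negPf nl) mulr0 scale0r.
have ml1 : (m l)%:R = 1 :> R.
  case: (gs_aroot hrs hss hth l) => gP _.
  have fP : f.1 \in Phi by case: af.
  case: (reduced hrs gP (_ : (m l)%:R *: (gs l).1 \in Phi)) => //; first by rewrite -hf1.
  move=> h; have : (0 : R) <= (m l)%:R by [].
  by rewrite h; lra.
rewrite hf ml1 comb_gs; apply: comb_ext => l'; by rewrite mul1r.
Qed.

Definition sref l := sr (gs l).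
Fixpoint evalw (s : seq idx) x := if s is l :: s' then sref l (evalw s' x) else x.
Fixpoint pbw (s : seq idx) f := if s is l :: s' then pbw s' (pb (gs l) f) else f.

Lemma ev_pbw s f x : ev (pbw s f) x = ev f (evalw s x).
Proof. by elim: s f => [|l s IH] f //=; rewrite IH ev_sr. Qed.

Lemma aroot_pbw s f : aroot f -> aroot (pbw s f).
Proof.
elim: s f => [|l s IH] f af //=; apply: IH.
exact: (aroot_pb hrs (gs_aroot hrs hss hth l) af).
Qed.

Lemma evalw_cat s t x : evalw (s ++ t) x = evalw s (evalw t x).
Proof. by elim: s => [|l s IH] //=; rewrite IH. Qed.

Lemma sref_invol l x : sref l (sref l x) = x.
Proof. exact: (sr_invol _ (gs_nz hrs hss hth l)). Qed.

Lemma evalw_rev_l s x : evalw (rev s) (evalw s x) = x.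
Proof.
elim: s x => [|l s IH] x //=; rewrite rev_cons -cats1 evalw_cat /=.
by rewrite sref_invol IH.
Qed.

Lemma evalw_rev_r s x : evalw s (evalw (rev s) x) = x.
Proof.
elim: s x => [|l s IH] x //=; rewrite rev_cons -cats1 evalw_cat /=.
by rewrite IH sref_invol.
Qed.

Lemma gen N : forall f (m : idx -> nat), aroot f -> pos_aff f ->
  f = comb (fun l => (m l)%:R) -> (\sum_l m l < N)%N ->
  exists s, forall x, sr f x = evalw s x.
Proof.
elim: N => [|N IH] f m af pf hm hN //.
have fP : f.1 \in Phi by case: af.
have [/existsP [l /andP [ml dl]]|] :=
  boolP [exists l, (0 < m l)%N && (0 < dotv f.1 (gs l).1)]; last first.
  rewrite negb_exists => /forallP hl.
  have : 0 < dotv f.1 f.1 by exact: (dotv_gt0 (root_neq0 hrs fP)).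
  rewrite {1}hm comb1_sum dotv_suml.
  rewrite ltNge => /negP; case; apply: sumr_le0 => l _.
  rewrite dotvZl (dotvC _ f.1); have := hl l; rewrite negb_and -!leNgt.
  case/orP => h; last by rewrite mulr_ge0_le0.
  by move: h; rewrite -eqn0Ngt => /eqP ->; rewrite mul0r.
set c := cf f.1 (gs l).1.
have c0 : 0 < c.
  by rewrite /c /cf divr_gt0 ?mulr_gt0 // dotv_gt0 // -dotv_eq0 (gs_nz hrs hss hth).
have [zc hzc] : exists z : int, c = z%:~R.
  by case: (gs_aroot hrs hss hth l) => gP _; exact: (cf_int hrs fP gP).
have c1 : 1 <= c.
  have h : (0 < zc)%R by rewrite -(ltr_int R) -hzc.
  have h1 : (1 <= zc)%R by lia.
  by rewrite hzc; move: h1; rewrite -(ler_int R).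
have af' : aroot (pb (gs l) f) by exact: (aroot_pb hrs (gs_aroot hrs hss hth l) af).
have hpb := pb_comb l hm.
case: (aroot_dicho hrs hss af') => hpos; last first.
  move: (key_C af pf hpos) => ->; exists [:: l] => x //.
have [m' hm'] := pos_comb hth af' hpos.
have hmm := comb_inj hss (etrans (esym hm') hpb).
have hsum : (\sum_l m' l < \sum_l m l)%N.
  rewrite -(ltr_nat R) !natr_sum.
  rewrite (eq_bigr _ (fun l' _ => hmm l')) sumrB -mulr_sumr.
  have sd : \sum_(i < n.+1) ((i == l)%:R : R) = 1.
    rewrite (bigD1 l) //= big1 ?addr0 ?eqxx //.
    by move=> l' nl; rewrite (negPf nl).
  rewrite sd mulr1; move: c1; rewrite /c; lra.
have [s hs] := IH _ _ af' hpos hm' (leq_trans hsum hN).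
exists (l :: s ++ [:: l]) => x.
rewrite -[f](pb_invol _ (gs_nz hrs hss hth l)) sr_pb ?(gs_nz hrs hss hth) //=.
by rewrite hs evalw_cat.
Qed.

Lemma gen_all f : aroot f -> exists s, forall x, sr f x = evalw s x.
Proof.
move=> af; case: (aroot_dicho hrs hss af) => hp.
  have [m hm] := pos_comb hth af hp.
  exact: (gen (N := (\sum_l m l).+1) af hp hm).
have af' := aroot_negf hrs af.
have [m hm] := pos_comb hth af' hp.
have [s hs] := gen (N := (\sum_l m l).+1) af' hp hm (ltnSn _).
by exists s => x; rewrite -sr_negf.
Qed.

Lemma Wa_words (w : V -> V) : in_Wa Phi w -> exists s, forall x, w x = evalw s x.
Proof.
elim=> [|a k w' aP _ [s hs]]; first by exists [::].
have af : aroot (a, k%:~R) by split => //; exists k.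
have [s1 hs1] := gen_all af.
by exists (s1 ++ s) => x; rewrite evalw_cat -hs -hs1.
Qed.

Lemma scan t : forall f, aroot f -> pos_aff f -> neg_aff (pbw t f) ->
  exists t1 l t2, t = t1 ++ l :: t2 /\ pbw t1 f = gs l.
Proof.
elim: t => [|l t IH] f af pf /= nf.
  by case: (pos_neg_excl hrs hss pf nf).
have af' : aroot (pb (gs l) f) by exact: (aroot_pb hrs (gs_aroot hrs hss hth l) af).
case: (aroot_dicho hrs hss af') => hp.
  have [t1 [l' [t2 [-> h]]]] := IH _ af' hp nf.
  by exists (l :: t1), l', t2.
by exists [::], l, t; split => //; exact: key_C.
Qed.

Lemma conj_w t1 : forall f l, pbw t1 f = gs l ->
  forall y, sr f (evalw t1 y) = evalw t1 (sref l y).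
Proof.
elim: t1 => [|l' t IH] f l /= h y; first by rewrite h.
rewrite -(IH _ _ h) sr_pb ?(gs_nz hrs hss hth) //.
by rewrite -/(sref l' _) sref_invol.
Qed.

Lemma deletion N : forall s, (size s < N)%N ->
  (forall x, fund_alcove Pi th x -> fund_alcove Pi th (evalw s x)) ->
  forall x, evalw s x = x.
Proof.
elim: N => [|N IH] [|l1 rest] //= hN hA x.
have [z hz] := alc_nonempty th hss.
have g1 := gs_aroot hrs hss hth l1.
have aphi : aroot (pbw rest (gs l1)) by apply: aroot_pbw.
have hneg : ev (pbw rest (gs l1)) z < 0.
  rewrite ev_pbw; have /alc_gs := hA z hz => /(_ l1) /=.
  by rewrite /sref ev_sr pb_self ?(gs_nz hrs hss hth) // ev_negf oppr_gt0.
case: (aroot_dicho hrs hss aphi) => hp.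
  by have h := pos_aff_ev hrs hth hp hz; exfalso; lra.
have [t1 [l [t2 [ht h]]]] := scan g1 (gs_pos hss hth l1) hp.
have e : forall y, sref l1 (evalw rest y) = evalw (t1 ++ t2) y.
  by move=> y; rewrite ht !evalw_cat /= -(conj_w h) sref_invol.
rewrite e; apply: IH.
  by move: hN; rewrite ht !size_cat /= addnS ltnS => /ltnW.
by move=> y hy; rewrite -e; apply: hA.
Qed.

End Words.
From Stdlib Require Import FunctionalExtensionality.

Lemma natz_R (R : realType) (v : nat) : (v%:Z)%:~R = v%:R :> R.
Proof. by rewrite -pmulrn. Qed.

Lemma strip_lt (R : realType) (v : nat) (k : int) (s : R) :
  v%:R - 1 < s -> s < v%:R -> (k%:~R < s) = (k < v%:Z)%R.
Proof.
move=> h1 h2; apply/idP/idP => h.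
  have : k%:~R < (v%:Z)%:~R :> R by rewrite natz_R; apply: lt_trans h h2.
  by rewrite ltr_int.
have h3 : (k <= v%:Z - 1)%R by lia.
have : k%:~R <= (v%:Z - 1)%:~R :> R by rewrite ler_int.
rewrite intrB natz_R => h4; lra.
Qed.

Lemma strip_gt (R : realType) (v : nat) (k : int) (s : R) :
  v%:R - 1 < s -> s < v%:R -> (s < k%:~R) = (v%:Z <= k)%R.
Proof.
move=> h1 h2; apply/idP/idP => h.
  have : (v%:Z - 1)%:~R < k%:~R :> R by rewrite intrB natz_R; apply: lt_trans h1 h.
  by rewrite ltr_int; lia.
have : (v%:Z)%:~R <= k%:~R :> R by rewrite ler_int.
rewrite natz_R => h4; lra.
Qed.

Lemma sum_ltr (R : realType) (T : eqType) (s : seq T) (F G : T -> R) :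
  s != [::] -> (forall p, p \in s -> F p < G p) ->
  \sum_(p <- s) F p < \sum_(p <- s) G p.
Proof.
elim: s => [|p s IH] // _ h; rewrite !big_cons.
have hp := h p (mem_head p s).
case: s IH h => [|q s] IH h; first by rewrite !big_nil !addr0.
apply: ltrD => //; apply: IH => // p' hp'; apply: h.
by rewrite in_cons hp' orbT.
Qed.

Unset Implicit Arguments.
Theorem proposition3p7 (R : realType) (n : nat) (Phi : seq 'rV[R]_n)
  (Pi : 'I_n -> 'rV[R]_n) (th : 'rV[R]_n) (m : nat) (Rg : 'rV[R]_n -> Prop)
  (wR : 'rV[R]_n -> 'rV[R]_n) :
  root_system Phi -> irreducible_rs Phi -> simple_system Phi Pi ->
  highest_root Phi Pi th -> (1 <= m)%N ->
  region Phi m Rg -> dominant Phi Pi Rg -> bounded Rg ->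
  in_Wa Phi wR ->
  (forall a, pos_root Phi Pi a ->
     exists v : nat, r_alpha (chainJ Phi Pi Rg) m a v /\ r_of Pi th wR a v%:Z) ->
  let P := fun w : 'rV[R]_n -> 'rV[R]_n =>
    (forall x, fund_alcove Pi th x -> Rg (w x)) /\
    (forall a (r : int), pos_root Phi Pi a ->
       (exists2 x, Rg x & r%:~R < dotv a x) ->
       forall x, fund_alcove Pi th x -> r%:~R < dotv a (w x)) in
  P wR /\ (forall w, in_Wa Phi w -> P w -> w = wR).
Proof.
move=> hrs hirr hss hth hm hreg hdom hbd hwR hr P.
have [x0 [hoff0 hRiff]] := hreg.
have Rx0 : Rg x0 by apply/hRiff; split.
have [z hz] := alc_nonempty th hss.
have bound : forall a v, r_alpha (chainJ Phi Pi Rg) m a v ->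
    forall x, Rg x -> dotv a x < v%:R.
  move=> a v [[s [sn -> hs ->]] _] x hx.
  rewrite dotv_suml natr_sum; apply: sum_ltr => // p hp.
  by have [_ [_ h]] := hs p hp; apply: h.
have strip : forall a, pos_root Phi Pi a -> exists v : nat,
    r_alpha (chainJ Phi Pi Rg) m a v /\
    (forall x, fund_alcove Pi th x -> v%:R - 1 < dotv a (wR x) < v%:R).
  move=> a ha; have [v [rv hv]] := hr a ha; exists v; split; first by [].
  by move=> x hx; have := hv x hx; rewrite natz_R.
have vpos : forall a v, pos_root Phi Pi a -> r_alpha (chainJ Phi Pi Rg) m a v ->
    1 <= v%:R :> R.
  move=> a v ha rv; have h1 := bound a v rv x0 Rx0; have h2 := hdom x0 Rx0 a ha.
  have : (0 < v)%N by rewrite -(ltr_nat R); lra.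
  by rewrite -(ler_nat R).
have PwR : P wR.
  split.
    move=> x hx; apply/hRiff; split.
      move=> a k aP hk; case: (pos_or_neg hrs hss aP) => hp.
        have [v [rv hv]] := strip a hp; have /andP [l u] := hv x hx.
        apply/negP => /eqP e; move: l u; rewrite e => l u.
        have h1 : (k < v)%N by rewrite -(ltr_nat R).
        have h2 : (v < k.+1)%N by rewrite -(ltr_nat R) -addn1 natrD; lra.
        lia.
      have [v [rv hv]] := strip _ hp; have /andP [l u] := hv x hx.
      have v1 := vpos _ _ hp rv.
      apply/negP => /eqP e; move: l; rewrite dotvNl e.
      have : (0 : R) <= k%:R by []. lra.
    move=> a k aP hk; case: (pos_or_neg hrs hss aP) => hp.
      have [v [rv hv]] := strip a hp; have /andP [l u] := hv x hx.
      rewrite -(natz_R R k) (strip_gt _ l u); apply/idP/idP => h.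
        by apply: lt_le_trans (bound _ _ rv _ Rx0) _; rewrite -natz_R ler_int.
      have hJ : chainJ Phi Pi Rg k a.
        split => // y hy; have [_ hy2] := (hRiff y).1 hy.
        by rewrite (hy2 a k aP hk) -natz_R.
      have : (v <= k)%N.
        case: rv => _; apply; exists [:: (a, k)]; split => //.
        - by rewrite big_seq1.
        - by move=> p; rewrite mem_seq1 => /eqP ->.
        - by rewrite big_seq1.
      by move=> hvk; lia.
    have [v [rv hv]] := strip _ hp; have /andP [l u] := hv x hx.
    have v1 := vpos _ _ hp rv; have h0 := hdom x0 Rx0 _ hp.
    have k0 : (0 : R) <= k%:R by [].
    rewrite !dotvNl in l h0.
    have -> : dotv a (wR x) < k%:R by lra.
    by have -> : dotv a x0 < k%:R by lra.
  move=> a r ha [x' hx' hlt] x hx.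
  have [v [rv hv]] := strip a ha; have /andP [l u] := hv x hx.
  have h1 := bound _ _ rv _ hx'.
  have : (r < v%:Z)%R by rewrite -(ltr_int R) natz_R; apply: lt_trans hlt h1.
  by rewrite -(strip_lt _ l u).
split => // w hw [Pw1 Pw2].
have stripw : forall a, pos_root Phi Pi a -> forall v,
    r_alpha (chainJ Phi Pi Rg) m a v ->
    (forall y, fund_alcove Pi th y -> v%:R - 1 < dotv a (wR y) < v%:R) ->
    forall y, fund_alcove Pi th y -> v%:R - 1 < dotv a (w y) < v%:R.
  move=> a ha v rv hv y hy; apply/andP; split; last first.
    exact: bound _ _ rv _ (Pw1 y hy).
  have := Pw2 a (v%:Z - 1) ha _ y hy; rewrite intrB natz_R; apply.
  exists (wR z); first by apply: (proj1 PwR).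
  by have /andP [] := hv z hz.
have [s hs] := Wa_words hrs hss hth hwR.
have [s' hs'] := Wa_words hrs hss hth hw.
have Au : forall y, fund_alcove Pi th y ->
    fund_alcove Pi th (evalw Pi th (rev s ++ s') y).
  move=> y hy; rewrite evalw_cat -hs'; apply/alc_gs => l.
  rewrite -ev_pbw.
  have ah : aroot Phi (pbw Pi th (rev s) (gs Pi th l)).
    exact: (aroot_pbw hrs hss hth _ (gs_aroot hrs hss hth l)).
  have e1 : 0 < ev (pbw Pi th (rev s) (gs Pi th l)) (wR z).
    by rewrite ev_pbw hs (evalw_rev_l hrs hss hth); move/alc_gs: hz; apply.
  move: e1 ah; case: (pbw _ _ _ _) => a k e1 [/= aP [kz /= hk]].
  move: e1; rewrite /ev /= hk.
  case: (pos_or_neg hrs hss aP) => hp.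
    have [v [rv hv]] := strip a hp.
    have /andP [l1 u1] := hv z hz.
    have /andP [l2 u2] := stripw a hp v rv hv y hy.
    rewrite !subr_gt0 (strip_lt _ l1 u1) (strip_lt _ l2 u2) //.
  have [v [rv hv]] := strip _ hp.
  have /andP [l1 u1] := hv z hz.
  have /andP [l2 u2] := stripw _ hp v rv hv y hy.
  move: l1 u1 l2 u2; rewrite !dotvNl => l1 u1 l2 u2.
  move=> e; have h1 : - dotv a (wR z) < (- kz)%:~R by rewrite rmorphN; lra.
  rewrite (strip_gt _ l1 u1) in h1.
  by move: h1; rewrite -(strip_gt _ l2 u2) rmorphN => h2; lra.
have hid := deletion hrs hss hth (ltnSn (size (rev s ++ s'))) Au.
apply: functional_extensionality => x.
rewrite hs -[w x](evalw_rev_r hrs hss hth s); congr (evalw _ _ _ _).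
by rewrite hs' -evalw_cat hid.
Qed.
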